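(* Let $S\subset\mathbf R^4$ be a surface and let $p\in S$ satisfy $\Delta(p)=0$ and $K(p)=0$. Then $p$ is a critical point of $\Delta$ (so the discriminant curve $\Delta=0$ is singular at $p$) and this singularity is non-Morse, i.e. the Hessian determinant of $\Delta$ at $p$ vanishes.
   Context: With respect to a smooth adapted orthonormal moving frame $e_1,e_2$ (tangent), $e_3,e_4$ (normal), the second fundamental form is $\mathbf{II}(u)=(au_1^2+2bu_1u_2+cu_2^2)e_3+(eu_1^2+2fu_1u_2+gu_2^2)e_4$ for $u=u_1e_1+u_2e_2$; $a,\dots,g$ are smooth functions on $S$. The Gaussian curvature is $K=(ac-b^2)+(eg-f^2)$, and $\Delta=(ac-b^2)(eg-f^2)-\tfrac14(ag+ce-2bf)^2$, regarded as a smooth function on $S$ (in local coordinates); the discriminant curve is $\{\Delta=0\}$. *)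

(* Defs.v *)
From Stdlib Require Import Reals List.
From Coquelicot Require Import Coquelicot.
Open Scope R_scope.

(* Functions on a coordinate chart, written as functions of two real
   variables (u, v).  Partial derivative: i = false is d/du, i = true is d/dv. *)
Definition pd (i : bool) (F : R -> R -> R) : R -> R -> R :=
  if i then fun x y => Derive (fun t => F x t) y
  else fun x y => Derive (fun t => F t y) x.

Definition iter_pd (l : list bool) (F : R -> R -> R) : R -> R -> R :=
  fold_right pd F l.

Definition smooth2d (F : R -> R -> R) : Prop :=
  forall (l : list bool) (x y : R),
    continuous (fun z : R * R => iter_pd l F (fst z) (snd z)) (x, y) /\
    ex_derive (fun t => iter_pd l F t y) x /\
    ex_derive (fun t => iter_pd l F x t) y.

Definition Kcurv (a b c e f g : R -> R -> R) : R -> R -> R :=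
  fun x y => (a x y * c x y - (b x y)^2) + (e x y * g x y - (f x y)^2).

Definition Delta2 (a b c e f g : R -> R -> R) : R -> R -> R :=
  fun x y => (a x y * c x y - (b x y)^2) * (e x y * g x y - (f x y)^2)
             - / 4 * (a x y * g x y + c x y * e x y - 2 * b x y * f x y)^2.

Definition hess_det (F : R -> R -> R) (x y : R) : R :=
  pd false (pd false F) x y * pd true (pd true F) x y
  - pd true (pd false F) x y * pd false (pd true F) x y.

(* Main.v *)
Require Import Defs.
From Stdlib Require Import Reals Lra Psatz.
From Coquelicot Require Import Coquelicot.
Open Scope R_scope.

Lemma alg (a b c e f g a1 b1 c1 e1 f1 g1 a2 b2 c2 e2 f2 g2 : R) :
  a*c - b^2 = 0 -> e*g - f^2 = 0 -> a*g + c*e - 2*b*f = 0 ->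
  let A1 := a1*c + a*c1 - 2*b*b1 in let A2 := a2*c + a*c2 - 2*b*b2 in
  let B1 := e1*g + e*g1 - 2*f*f1 in let B2 := e2*g + e*g2 - 2*f*f2 in
  let C1 := a1*g + a*g1 + c1*e + c*e1 - 2*(b1*f + b*f1) in
  let C2 := a2*g + a*g2 + c2*e + c*e2 - 2*(b2*f + b*f2) in
  (A1*B1 + A1*B1 - /2*(C1*C1)) * (A2*B2 + A2*B2 - /2*(C2*C2))
  - (A1*B2 + A2*B1 - /2*(C2*C1)) * (A2*B1 + A1*B2 - /2*(C1*C2)) = 0.
Proof.
intros H1 H2 H3 A1 A2 B1 B2 C1 C2.
unfold A1, A2, B1, B2, C1, C2.
destruct (Req_dec a 0) as [Ha|Ha].
- subst a. assert (b = 0) by nra. subst b.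
  destruct (Req_dec c 0) as [Hc|Hc].
  + subst c. field.
  + assert (e = 0). { apply (Rmult_eq_reg_l c); [lra|lra]. }
    subst e. assert (f = 0) by nra. subst f. field.
- assert (hc : c = b*b/a) by (field_simplify_eq; [lra|auto]).
  assert (H4 : a*a*g + b*b*e - 2*a*b*f = 0).
  { replace (a*a*g + b*b*e - 2*a*b*f) with (a*(a*g+c*e-2*b*f) - e*(a*c-b^2)) by ring. rewrite H1, H3; ring. }
  assert (H5 : (a*f - b*e)^2 = 0).
  { replace ((a*f - b*e)^2) with (-(a^2*(e*g-f^2)) + e*(a*a*g + b*b*e - 2*a*b*f)) by ring.
    rewrite H2, H4; ring. }
  assert (H6 : a*f - b*e = 0) by nra.
  assert (H7 : a*a*g - b*b*e = 0).
  { replace (a*a*g - b*b*e) with ((a*a*g + b*b*e - 2*a*b*f) + 2*b*(a*f - b*e)) by ring.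
    rewrite H4, H6; ring. }
  assert (hf : f = b*e/a). { field_simplify_eq; [lra|auto]. }
  assert (hg : g = b*b*e/(a*a)). { field_simplify_eq; [lra|auto]. }
  subst c f g. field. auto.
Qed.


Section S.
Variables a b c e f g : R -> R -> R.

Definition Aq (a b c : R -> R -> R) x y := a x y * c x y - b x y ^ 2.
Definition Cq x y := a x y * g x y + c x y * e x y - 2 * b x y * f x y.
Definition dA i (a b c : R -> R -> R) x y :=
  pd i a x y * c x y + a x y * pd i c x y - 2 * b x y * pd i b x y.
Definition dC i x y :=
  pd i a x y * g x y + a x y * pd i g x y + pd i c x y * e x y + c x y * pd i e x y
  - 2 * (pd i b x y * f x y + b x y * pd i f x y).
Definition E1 i x y :=
  dA i a b c x y * Aq e f g x y + Aq a b c x y * dA i e f g x y - / 2 * Cq x y * dC i x y.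

Lemma sm_ex (h : R -> R -> R) l x y : smooth2d h ->
  ex_derive (fun t => iter_pd l h t y) x /\ ex_derive (fun t => iter_pd l h x t) y.
Proof. intros H; apply H. Qed.

Lemma D1 : smooth2d a -> smooth2d b -> smooth2d c -> smooth2d e -> smooth2d f -> smooth2d g ->
  forall i x y, pd i (Delta2 a b c e f g) x y = E1 i x y.
Proof.
intros Ha Hb Hc He Hf Hg i x y.
destruct (sm_ex a nil x y Ha) as [a1 a2].
destruct (sm_ex b nil x y Hb) as [b1 b2].
destruct (sm_ex c nil x y Hc) as [c1 c2].
destruct (sm_ex e nil x y He) as [e1 e2].
destruct (sm_ex f nil x y Hf) as [f1 f2].
destruct (sm_ex g nil x y Hg) as [g1 g2].
simpl in *.
destruct i; unfold E1, dA, dC, Aq, Cq, Delta2; simpl;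
 apply is_derive_unique; auto_derive; try tauto.
all: field.
Qed.


Definition ddA i j (a b c : R -> R -> R) x y :=
  pd j (pd i a) x y * c x y + pd i a x y * pd j c x y + pd j a x y * pd i c x y
  + a x y * pd j (pd i c) x y
  - 2 * (pd j b x y * pd i b x y + b x y * pd j (pd i b) x y).
Definition ddC i j x y :=
  pd j (pd i a) x y * g x y + pd i a x y * pd j g x y + pd j a x y * pd i g x y + a x y * pd j (pd i g) x y
  + (pd j (pd i c) x y * e x y + pd i c x y * pd j e x y + pd j c x y * pd i e x y + c x y * pd j (pd i e) x y)
  - 2 * (pd j (pd i b) x y * f x y + pd i b x y * pd j f x y + pd j b x y * pd i f x y + b x y * pd j (pd i f) x y).
Definition E2 i j x y :=
  ddA i j a b c x y * Aq e f g x y + dA i a b c x y * dA j e f g x y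
  + dA j a b c x y * dA i e f g x y + Aq a b c x y * ddA i j e f g x y
  - / 2 * (dC j x y * dC i x y + Cq x y * ddC i j x y).

Lemma pd_ext (F G : R -> R -> R) j x y : (forall x y, F x y = G x y) -> pd j F x y = pd j G x y.
Proof. intros H; destruct j; simpl; apply Derive_ext; auto. Qed.

Lemma D2 : smooth2d a -> smooth2d b -> smooth2d c -> smooth2d e -> smooth2d f -> smooth2d g ->
  forall i j x y, pd j (E1 i) x y = E2 i j x y.
Proof.
intros Ha Hb Hc He Hf Hg i j x y.
pose proof (sm_ex a nil x y Ha). pose proof (sm_ex b nil x y Hb). pose proof (sm_ex c nil x y Hc).
pose proof (sm_ex e nil x y He). pose proof (sm_ex f nil x y Hf). pose proof (sm_ex g nil x y Hg).
pose proof (sm_ex a (i::nil) x y Ha). pose proof (sm_ex b (i::nil) x y Hb). pose proof (sm_ex c (i::nil) x y Hc).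
pose proof (sm_ex e (i::nil) x y He). pose proof (sm_ex f (i::nil) x y Hf). pose proof (sm_ex g (i::nil) x y Hg).
destruct i, j; unfold E2, E1, ddA, ddC, dA, dC, Aq, Cq; unfold pd at 1; cbv iota beta;
 apply is_derive_unique; auto_derive; try tauto; cbv beta iota delta [pd]; field.
Qed.
End S.

Theorem mainTheorem6 (a b c e f g : R -> R -> R) (x0 y0 : R) :
  smooth2d a -> smooth2d b -> smooth2d c -> smooth2d e -> smooth2d f -> smooth2d g ->
  Delta2 a b c e f g x0 y0 = 0 ->
  Kcurv a b c e f g x0 y0 = 0 ->
  (pd false (Delta2 a b c e f g) x0 y0 = 0 /\
   pd true (Delta2 a b c e f g) x0 y0 = 0) /\
  hess_det (Delta2 a b c e f g) x0 y0 = 0.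
Proof.
intros Ha Hb Hc He Hf Hg HD HK.
assert (HA : Aq a b c x0 y0 = 0 /\ Aq e f g x0 y0 = 0 /\ Cq a b c e f g x0 y0 = 0).
{ unfold Aq, Cq; unfold Delta2, Kcurv in *.
  revert HD HK.
  generalize (a x0 y0 * c x0 y0 - b x0 y0 ^ 2) (e x0 y0 * g x0 y0 - f x0 y0 ^ 2)
    (a x0 y0 * g x0 y0 + c x0 y0 * e x0 y0 - 2 * b x0 y0 * f x0 y0).
  intros A B C HD HK.
  assert (HB0 : B = - A) by lra. subst B.
  assert (H0 : A*A + /4*(C*C) = 0). { replace (A*A + /4*(C*C)) with (-(A * - A - / 4 * C ^ 2)) by ring. rewrite HD; ring. }
  assert (A = 0) by nra. subst A. split; [ring|split; [ring|]].
  assert (C*C = 0) by lra. nra. }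
destruct HA as [HA [HB HC]].
pose proof (D1 a b c e f g Ha Hb Hc He Hf Hg) as d1.
pose proof (D2 a b c e f g Ha Hb Hc He Hf Hg) as d2.
split.
- rewrite !d1. unfold E1. rewrite HA, HB, HC. split; ring.
- unfold hess_det.
  rewrite !(pd_ext _ _ _ _ _ (d1 _)), !d2.
  unfold E2. rewrite HA, HB, HC.
  pose proof (alg (a x0 y0) (b x0 y0) (c x0 y0) (e x0 y0) (f x0 y0) (g x0 y0)
    (pd false a x0 y0) (pd false b x0 y0) (pd false c x0 y0) (pd false e x0 y0) (pd false f x0 y0) (pd false g x0 y0)
    (pd true a x0 y0) (pd true b x0 y0) (pd true c x0 y0) (pd true e x0 y0) (pd true f x0 y0) (pd true g x0 y0)) as Hal.
  unfold Aq, Cq in HA, HB, HC. specialize (Hal HA HB HC). cbv zeta in Hal.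
  unfold dA, dC. match type of Hal with ?L = 0 => transitivity L; [field|exact Hal] end.
Qed.
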